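(* Let $\mu>0$ and let $X$ have the skew-symmetric-Laplace-uniform density $g$ with parameter $\mu$ (defined in the context), with reliability function $R(x)=P(X>x)$. Then the hazard rate $h(x)=g(x)/R(x)$ is $$h(x)=\begin{cases}0 & x<-\mu,\\ \left[-1+\dfrac{1+(2\mu-e^{-\mu})e^{-x}}{x+\mu}\right]^{-1} & -\mu\le x<0,\\ \left[1+\dfrac{1-e^{x-\mu}}{x+\mu}\right]^{-1} & 0\le x<\mu,\\ 1 & x\ge\mu,\end{cases}$$ (where at $x=-\mu$ the bracketed expression is interpreted as $+\infty$, so $h(-\mu)=0$). Moreover, for every $\mu\in\mathbb{R}\setminus\{0\}$ (positive or negative), the hazard rate of $SSLUD(\mu)$ is a nondecreasing function of $x$ on the set $\{x: R(x)>0\}$; that is, $SSLUD(\mu)$ is an increasing failure rate (IFR) distribution.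
   Context: For $\mu\in\mathbb{R}\setminus\{0\}$, the skew-symmetric-Laplace-uniform distribution $SSLUD(\mu)$ is the distribution on $\mathbb{R}$ with density $$g(x)=\begin{cases} 0 & \text{if } x/\mu<-1,\\ e^{-|x|}\left(\dfrac{x}{2\mu}+\dfrac12\right) & \text{if } -1\le x/\mu<1,\\ e^{-|x|} & \text{if } x/\mu\ge 1.\end{cases}$$ The hazard rate is $h(x)=g(x)/R(x)$ with $R(x)=1-G(x)$, $G$ the cdf. *)

(* Defs.v *)
From Stdlib Require Import Reals Lra.
From Coquelicot Require Import Coquelicot.
Open Scope R_scope.

Definition sslud_density (mu x : R) : R :=
  if Rlt_dec (x / mu) (-1) then 0
  else if Rlt_dec (x / mu) 1 then exp (- Rabs x) * (x / (2 * mu) + 1 / 2)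
  else exp (- Rabs x).

Definition sslud_reliability (mu x : R) : R :=
  RInt_gen (sslud_density mu) (at_point x) (Rbar_locally p_infty).

Definition sslud_hazard (mu x : R) : R :=
  sslud_density mu x / sslud_reliability mu x.

(* Main.v *)
Require Import Defs.
From Stdlib Require Import Reals Lra.
From Coquelicot Require Import Coquelicot.
Open Scope R_scope.

Lemma at_point_lim (F : R -> R) x : filterlim F (at_point x) (locally (F x)).
Proof. intros P HP. unfold filtermap, at_point. now apply locally_singleton. Qed.

Lemma tail (g F f : R -> R) x L :
  (forall t, is_derive F t (f t)) -> (forall t, continuous f t) ->
  (forall t, x < t -> g t = f t) ->
  filterlim F (Rbar_locally p_infty) (locally L) ->
  is_RInt_gen g (at_point x) (Rbar_locally p_infty) (L - F x).
Proof.
  intros HD HC Hg HL.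
  apply is_RInt_gen_ext with (Derive F).
  - apply Filter_prod with (fun a => a = x) (fun b => x < b).
    + reflexivity.
    + exists x. auto.
    + simpl. intros a b -> Hb t Ht. rewrite Rmin_left in Ht by lra. rewrite Rmax_right in Ht by lra.
      rewrite (is_derive_unique _ _ _ (HD t)). symmetry. apply Hg. lra.
  - apply is_RInt_gen_Derive.
    + apply Filter_prod with (fun a => a = x) (fun b => x < b).
      * reflexivity.
      * exists x. auto.
      * intros; eexists; apply HD.
    + apply Filter_prod with (fun a => a = x) (fun b => x < b).
      * reflexivity.
      * exists x. auto.
      * intros a b _ _ t _. apply continuous_ext with f. intros; symmetry; apply is_derive_unique, HD. apply HC.
    + apply at_point_lim.
    + exact HL.
Qed.

Lemma lim_mexp : filterlim (fun t => - exp (- t)) (Rbar_locally p_infty) (locally 0).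
Proof.
  assert (H: is_lim (fun t => - exp (- t)) p_infty 0).
  { replace (Finite 0) with (Rbar_opp 0) by (simpl; f_equal; ring).
    apply is_lim_opp. eapply is_lim_comp. apply is_lim_exp_m.
    apply (is_lim_opp (fun t => t) p_infty p_infty). apply is_lim_id.
    exists 0. intros; discriminate. }
  exact H.
Qed.

Lemma lim_zero : filterlim (fun _ : R => 0) (Rbar_locally p_infty) (locally 0).
Proof. apply filterlim_const. Qed.

Lemma piece (g F f : R -> R) a b : a <= b ->
  (forall t, a <= t <= b -> is_derive F t (f t)) ->
  (forall t, a <= t <= b -> continuous f t) ->
  (forall t, a < t < b -> g t = f t) ->
  is_RInt_gen g (at_point a) (at_point b) (F b - F a).
Proof.
  intros Hab HD HC Hg. apply is_RInt_gen_at_point.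
  apply is_RInt_ext with f.
  - intros t Ht. rewrite Rmin_left in Ht by lra. rewrite Rmax_right in Ht by lra. symmetry; auto.
  - apply (@is_RInt_derive R_CompleteNormedModule F f a b).
    + intros t Ht. rewrite Rmin_left in Ht by lra. rewrite Rmax_right in Ht by lra. auto.
    + intros t Ht. rewrite Rmin_left in Ht by lra. rewrite Rmax_right in Ht by lra. auto.
Qed.

Lemma chain (g : R -> R) a b l1 l2 :
  is_RInt_gen g (at_point a) (at_point b) l1 ->
  is_RInt_gen g (at_point b) (Rbar_locally p_infty) l2 ->
  is_RInt_gen g (at_point a) (Rbar_locally p_infty) (l1 + l2).
Proof. intros H1 H2. exact (is_RInt_gen_Chasles g b l1 l2 H1 H2). Qed.

Lemma RI_unique (g : R -> R) (x l : R) :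
  is_RInt_gen g (at_point x) (Rbar_locally p_infty) l ->
  RInt_gen g (at_point x) (Rbar_locally p_infty) = l.
Proof. intros H. apply (@is_RInt_gen_unique R_CompleteNormedModule); try apply _; exact H. Qed.

Lemma cont_of_der (f : R -> R) (t : R) : ex_derive f t -> continuous f t.
Proof. intros H. apply (@ex_derive_continuous R_AbsRing R_NormedModule f t H). Qed.

Lemma divq M t : M <> 0 -> t = (t / M) * M.
Proof. intros; field; auto. Qed.

Lemma dP0 M t : 0 < M -> t < - M -> sslud_density M t = 0.
Proof.
  intros HM Ht. unfold sslud_density. pose proof (divq M t ltac:(lra)) as E.
  set (q := t / M) in *. destruct (Rlt_dec q (-1)); [reflexivity|]. exfalso. nra.
Qed.

Lemma dPA M t : 0 < M -> -M <= t <= 0 -> sslud_density M t = exp t * (t + M) / (2 * M).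
Proof.
  intros HM Ht. unfold sslud_density. pose proof (divq M t ltac:(lra)) as E.
  destruct (Rlt_dec (t/M) (-1)) as [h|h].
  { exfalso. set (q := t / M) in *. nra. }
  destruct (Rlt_dec (t/M) 1) as [h'|h'].
  - rewrite Rabs_left1 by lra. rewrite Ropp_involutive. field. lra.
  - exfalso. set (q := t / M) in *. nra.
Qed.

Lemma dPB M t : 0 < M -> 0 <= t <= M -> sslud_density M t = exp (- t) * (t + M) / (2 * M).
Proof.
  intros HM Ht. unfold sslud_density. pose proof (divq M t ltac:(lra)) as E.
  destruct (Rlt_dec (t/M) (-1)) as [h|h].
  { exfalso. set (q := t / M) in *. nra. }
  destruct (Rlt_dec (t/M) 1) as [h'|h'].
  - rewrite Rabs_pos_eq by lra. field. lra.
  - assert (t = M). { set (q := t / M) in *. nra. } subst t.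
    rewrite Rabs_pos_eq by lra. field. lra.
Qed.

Lemma dPC M t : 0 < M -> M <= t -> sslud_density M t = exp (- t).
Proof.
  intros HM Ht. unfold sslud_density. pose proof (divq M t ltac:(lra)) as E.
  destruct (Rlt_dec (t/M) (-1)) as [h|h].
  { exfalso. set (q := t / M) in *. nra. }
  destruct (Rlt_dec (t/M) 1) as [h'|h'].
  - exfalso. set (q := t / M) in *. nra.
  - rewrite Rabs_pos_eq by lra. reflexivity.
Qed.

Lemma dN0 m t : 0 < m -> m < t -> sslud_density (- m) t = 0.
Proof.
  intros HM Ht. unfold sslud_density. pose proof (divq (-m) t ltac:(lra)) as E.
  set (q := t / - m) in *. destruct (Rlt_dec q (-1)); [reflexivity|]. exfalso. nra.
Qed.

Lemma dNA m t : 0 < m -> t <= - m -> sslud_density (- m) t = exp t.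
Proof.
  intros HM Ht. unfold sslud_density. pose proof (divq (-m) t ltac:(lra)) as E.
  destruct (Rlt_dec (t/ -m) (-1)) as [h|h].
  { exfalso. set (q := t / - m) in *. nra. }
  destruct (Rlt_dec (t/ -m) 1) as [h'|h'].
  - exfalso. set (q := t / - m) in *. nra.
  - rewrite Rabs_left1 by lra. rewrite Ropp_involutive. reflexivity.
Qed.

Lemma dNB m t : 0 < m -> - m <= t <= 0 -> sslud_density (- m) t = exp t * (m - t) / (2 * m).
Proof.
  intros HM Ht. unfold sslud_density. pose proof (divq (-m) t ltac:(lra)) as E.
  destruct (Rlt_dec (t/ -m) (-1)) as [h|h].
  { exfalso. set (q := t / - m) in *. nra. }
  destruct (Rlt_dec (t/ -m) 1) as [h'|h'].
  - rewrite Rabs_left1 by lra. rewrite Ropp_involutive. field. lra.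
  - assert (t = - m). { set (q := t / - m) in *. nra. } subst t.
    rewrite Rabs_left1 by lra. rewrite Ropp_involutive. field. lra.
Qed.

Lemma dNC m t : 0 < m -> 0 <= t <= m -> sslud_density (- m) t = exp (- t) * (m - t) / (2 * m).
Proof.
  intros HM Ht. unfold sslud_density. pose proof (divq (-m) t ltac:(lra)) as E.
  destruct (Rlt_dec (t/ -m) (-1)) as [h|h].
  { exfalso. set (q := t / - m) in *. nra. }
  destruct (Rlt_dec (t/ -m) 1) as [h'|h'].
  - rewrite Rabs_pos_eq by lra. field. lra.
  - exfalso. set (q := t / - m) in *. nra.
Qed.

Definition FA M t := exp t * (t + M - 1) / (2 * M).
Definition FB M t := - exp (- t) * (t + M + 1) / (2 * M).
Definition RB M x := exp (- M) + (FB M M - FB M x).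
Definition RA M x := RB M 0 + (FA M 0 - FA M x).

Lemma tailP M x : 0 < M -> M <= x ->
  is_RInt_gen (sslud_density M) (at_point x) (Rbar_locally p_infty) (exp (- x)).
Proof.
  intros HM Hx.
  assert (H := tail (sslud_density M) (fun t => - exp (- t)) (fun t => exp (- t)) x 0).
  cbv beta in H. replace (0 - - exp (- x)) with (exp (- x)) in H by ring.
  apply H.
  - intros t. auto_derive; [auto | ring].
  - intros t. apply cont_of_der. auto_derive. auto.
  - intros t Ht. apply dPC; lra.
  - apply lim_mexp.
Qed.

Lemma intPB M x : 0 < M -> 0 <= x <= M ->
  is_RInt_gen (sslud_density M) (at_point x) (at_point M) (FB M M - FB M x).
Proof.
  intros HM Hx. apply piece with (f := fun t => exp (- t) * (t + M) / (2 * M)).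
  - lra.
  - intros t _. unfold FB. auto_derive; [auto | field; lra].
  - intros t _. apply cont_of_der. auto_derive. lra.
  - intros t Ht. apply dPB; lra.
Qed.

Lemma intPA M x : 0 < M -> - M <= x <= 0 ->
  is_RInt_gen (sslud_density M) (at_point x) (at_point 0) (FA M 0 - FA M x).
Proof.
  intros HM Hx. apply piece with (f := fun t => exp t * (t + M) / (2 * M)).
  - lra.
  - intros t _. unfold FA. auto_derive; [auto | field; lra].
  - intros t _. apply cont_of_der. auto_derive. lra.
  - intros t Ht. apply dPA; lra.
Qed.

Lemma intP0 M x : 0 < M -> x <= - M ->
  is_RInt_gen (sslud_density M) (at_point x) (at_point (- M)) 0.
Proof.
  intros HM Hx.
  assert (H := piece (sslud_density M) (fun _ => 0) (fun _ => 0) x (- M)).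
  cbv beta in H. replace (0 - 0) with 0 in H by ring. apply H.
  - lra.
  - intros t _. apply (is_derive_const (K:=R_AbsRing) (V:=R_NormedModule) 0 t).
  - intros t _. apply (continuous_const (U:=R_UniformSpace) (V:=R_UniformSpace) 0 t).
  - intros t Ht. apply dP0; lra.
Qed.

Lemma relPC M x : 0 < M -> M <= x -> sslud_reliability M x = exp (- x).
Proof. intros HM Hx. unfold sslud_reliability. apply RI_unique. apply tailP; assumption. Qed.

Lemma relPB M x : 0 < M -> 0 <= x <= M -> sslud_reliability M x = RB M x.
Proof.
  intros. unfold sslud_reliability. apply RI_unique. unfold RB. rewrite Rplus_comm.
  apply chain with M. apply intPB; auto. apply tailP; lra.
Qed.

Lemma relPA M x : 0 < M -> - M <= x <= 0 -> sslud_reliability M x = RA M x.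
Proof.
  intros. unfold sslud_reliability. apply RI_unique. unfold RA. rewrite Rplus_comm.
  apply chain with 0. apply intPA; auto.
  unfold RB. rewrite Rplus_comm. apply chain with M. apply intPB; lra. apply tailP; lra.
Qed.

Lemma relP0 M x : 0 < M -> x <= - M -> sslud_reliability M x = RA M (- M).
Proof.
  intros. unfold sslud_reliability. apply RI_unique. replace (RA M (-M)) with (0 + RA M (-M)) by ring.
  apply chain with (-M). apply intP0; auto.
  unfold RA. rewrite Rplus_comm.
  apply chain with 0. apply intPA; lra.
  unfold RB. rewrite Rplus_comm. apply chain with M. apply intPB; lra. apply tailP; lra.
Qed.

Definition FN2 m t := exp t * (m - t + 1) / (2 * m).
Definition FN3 m t := exp (- t) * (t - m + 1) / (2 * m).
Definition RN3 m x := FN3 m m - FN3 m x + 0.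
Definition RN2 m x := FN2 m 0 - FN2 m x + RN3 m 0.
Definition RN1 m x := exp (- m) - exp x + RN2 m (- m).

Lemma tailN m x : 0 < m -> m <= x ->
  is_RInt_gen (sslud_density (- m)) (at_point x) (Rbar_locally p_infty) 0.
Proof.
  intros HM Hx.
  assert (H := tail (sslud_density (- m)) (fun _ => 0) (fun _ => 0) x 0).
  cbv beta in H. replace (0 - 0) with 0 in H by ring. apply H.
  - intros t. apply (is_derive_const (K:=R_AbsRing) (V:=R_NormedModule) 0 t).
  - intros t. apply (continuous_const (U:=R_UniformSpace) (V:=R_UniformSpace) 0 t).
  - intros t Ht. apply dN0; lra.
  - apply lim_zero.
Qed.

Lemma intN3 m x : 0 < m -> 0 <= x <= m ->
  is_RInt_gen (sslud_density (- m)) (at_point x) (at_point m) (FN3 m m - FN3 m x).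
Proof.
  intros HM Hx. apply piece with (f := fun t => exp (- t) * (m - t) / (2 * m)).
  - lra.
  - intros t _. unfold FN3. auto_derive; [auto | field; lra].
  - intros t _. apply cont_of_der. auto_derive. lra.
  - intros t Ht. apply dNC; lra.
Qed.

Lemma intN2 m x : 0 < m -> - m <= x <= 0 ->
  is_RInt_gen (sslud_density (- m)) (at_point x) (at_point 0) (FN2 m 0 - FN2 m x).
Proof.
  intros HM Hx. apply piece with (f := fun t => exp t * (m - t) / (2 * m)).
  - lra.
  - intros t _. unfold FN2. auto_derive; [auto | field; lra].
  - intros t _. apply cont_of_der. auto_derive. lra.
  - intros t Ht. apply dNB; lra.
Qed.

Lemma intN1 m x : 0 < m -> x <= - m ->
  is_RInt_gen (sslud_density (- m)) (at_point x) (at_point (- m)) (exp (- m) - exp x).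
Proof.
  intros HM Hx. apply piece with (f := fun t => exp t).
  - lra.
  - intros t _. auto_derive; [auto | ring].
  - intros t _. apply cont_of_der. auto_derive. auto.
  - intros t Ht. apply dNA; lra.
Qed.

Lemma relN4 m x : 0 < m -> m <= x -> sslud_reliability (- m) x = 0.
Proof. intros HM Hx. unfold sslud_reliability. apply RI_unique. apply tailN; assumption. Qed.

Lemma relN3 m x : 0 < m -> 0 <= x <= m -> sslud_reliability (- m) x = RN3 m x.
Proof.
  intros. unfold sslud_reliability. apply RI_unique. unfold RN3.
  apply chain with m. apply intN3; auto. apply tailN; lra.
Qed.

Lemma relN2 m x : 0 < m -> - m <= x <= 0 -> sslud_reliability (- m) x = RN2 m x.
Proof.
  intros. unfold sslud_reliability. apply RI_unique. unfold RN2.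
  apply chain with 0. apply intN2; auto. unfold RN3.
  apply chain with m. apply intN3; lra. apply tailN; lra.
Qed.

Lemma relN1 m x : 0 < m -> x <= - m -> sslud_reliability (- m) x = RN1 m x.
Proof.
  intros. unfold sslud_reliability. apply RI_unique. unfold RN1.
  apply chain with (- m). apply intN1; auto. unfold RN2.
  apply chain with 0. apply intN2; lra. unfold RN3.
  apply chain with m. apply intN3; lra. apply tailN; lra.
Qed.

Lemma exp_le x y : x <= y -> exp x <= exp y.
Proof. intros [H|H]. left; now apply exp_increasing. right; now subst. Qed.

Lemma inv_div a b : a <> 0 -> b <> 0 -> a / b = / (b / a).
Proof. intros; field; auto. Qed.

Lemma div_le a b c d : 0 < b -> 0 < d -> a * d <= c * b -> a / b <= c / d.
Proof.
  intros Hb Hd H.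
  replace (a / b) with (a * d * / (b * d)) by (field; lra).
  replace (c / d) with (c * b * / (b * d)) by (field; lra).
  apply Rmult_le_compat_r; [left; apply Rinv_0_lt_compat; nra | exact H].
Qed.

Lemma exp_bound u : 0 < u -> exp (- u) * (u + 1) < 1.
Proof.
  intros Hu. assert (H1 := exp_ineq1 u ltac:(lra)).
  assert (H2 : exp (- u) * exp u = 1) by (rewrite exp_Ropp; field; apply Rgt_not_eq, exp_pos).
  assert (H3 := exp_pos (- u)). nra.
Qed.

Lemma exp_bound_le u : exp (- u) * (u + 1) <= 1.
Proof.
  assert (H1 := exp_ineq1_le u).
  assert (H2 : exp (- u) * exp u = 1) by (rewrite exp_Ropp; field; apply Rgt_not_eq, exp_pos).
  assert (H3 := exp_pos (- u)). nra.
Qed.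

Lemma glue (f : R -> R) (S : R -> Prop) b : S b ->
  (forall x y, S x -> S y -> x <= y -> y <= b -> f x <= f y) ->
  (forall x y, S x -> S y -> b <= x -> x <= y -> f x <= f y) ->
  forall x y, S x -> S y -> x <= y -> f x <= f y.
Proof.
  intros Sb L Rr x y Sx Sy Hxy. destruct (Rle_dec y b). apply L; auto.
  destruct (Rle_dec b x). apply Rr; auto.
  apply Rle_trans with (f b); [apply L|apply Rr]; auto; lra.
Qed.

Lemma RB_eq M x : 0 < M -> RB M x = (exp (- x) * (x + M + 1) - exp (- M)) / (2 * M).
Proof. intros. unfold RB, FB. field. lra. Qed.

Lemma RB_pos M x : 0 < M -> 0 <= x <= M -> 0 < RB M x.
Proof.
  intros HM Hx. rewrite RB_eq by auto. apply Rdiv_lt_0_compat; [|lra].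
  assert (H := exp_le (- M) (- x) ltac:(lra)). assert (H2 := exp_pos (- M)). nra.
Qed.

Lemma RA_pos M x : 0 < M -> - M <= x <= 0 -> 0 < RA M x.
Proof.
  intros HM Hx. unfold RA.
  assert (H0 := RB_pos M 0 HM ltac:(lra)).
  enough (0 <= FA M 0 - FA M x) by lra.
  unfold FA. rewrite exp_0.
  replace (1 * (0 + M - 1) / (2 * M) - exp x * (x + M - 1) / (2 * M))
    with ((M - 1 - exp x * (x + M - 1)) / (2 * M)) by (field; lra).
  apply Rmult_le_pos; [|left; apply Rinv_0_lt_compat; lra].
  assert (E1 := exp_ineq1_le x). assert (E2 := exp_le x 0 ltac:(lra)). rewrite exp_0 in E2.
  assert (E3 := exp_pos x).
  destruct (Rle_dec 0 (x + M - 1)).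
  - nra.
  - assert (exp x * (x + M - 1) <= (1 + x) * (x + M - 1)) by nra. nra.
Qed.

Definition kA M x := (1 + (2 * M - exp (- M)) * exp (- x)) / (x + M).
Definition kB M x := (1 - exp (x - M)) / (x + M).

Lemma hP0 M x : 0 < M -> x <= - M -> sslud_hazard M x = 0.
Proof.
  intros HM Hx. unfold sslud_hazard. destruct (Rle_lt_or_eq _ _ Hx) as [H|H].
  - rewrite dP0 by auto. unfold Rdiv; ring.
  - rewrite dPA by lra. rewrite H. unfold Rdiv; ring.
Qed.

Lemma kA_eq M x : 0 < M -> - M < x <= 0 ->
  -1 + kA M x = RA M x / (exp x * (x + M) / (2 * M)).
Proof.
  intros HM Hx. unfold kA, RA, RB, FA, FB. rewrite Ropp_0, exp_0.
  rewrite (exp_Ropp x). assert (exp x <> 0) by (apply Rgt_not_eq, exp_pos).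
  field. repeat split; lra.
Qed.

Lemma hPA M x : 0 < M -> - M < x <= 0 -> sslud_hazard M x = / (-1 + kA M x).
Proof.
  intros HM Hx. unfold sslud_hazard. rewrite dPA by lra. rewrite relPA by lra.
  rewrite kA_eq by auto. apply inv_div.
  - assert (exp x > 0) by apply exp_pos. apply Rgt_not_eq. apply Rdiv_lt_0_compat; nra.
  - apply Rgt_not_eq, RA_pos; lra.
Qed.

Lemma kB_eq M x : 0 < M -> 0 <= x <= M ->
  1 + kB M x = RB M x / (exp (- x) * (x + M) / (2 * M)).
Proof.
  intros HM Hx. unfold kB, RB, FB.
  replace (exp (x - M)) with (exp x * exp (- M)) by (unfold Rminus; symmetry; apply exp_plus).
  rewrite (exp_Ropp x). assert (exp x <> 0) by (apply Rgt_not_eq, exp_pos).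
  field. repeat split; lra.
Qed.

Lemma hPB M x : 0 < M -> 0 <= x <= M -> sslud_hazard M x = / (1 + kB M x).
Proof.
  intros HM Hx. unfold sslud_hazard. rewrite dPB by lra. rewrite relPB by lra.
  rewrite kB_eq by auto. apply inv_div.
  - assert (exp (- x) > 0) by apply exp_pos. apply Rgt_not_eq. apply Rdiv_lt_0_compat; nra.
  - apply Rgt_not_eq, RB_pos; lra.
Qed.

Lemma hPC M x : 0 < M -> M <= x -> sslud_hazard M x = 1.
Proof.
  intros HM Hx. unfold sslud_hazard. rewrite dPC, relPC by lra.
  field. apply Rgt_not_eq, exp_pos.
Qed.

Lemma kA_anti M x y : 0 < M -> - M < x -> x <= y -> kA M y <= kA M x.
Proof.
  intros HM Hx Hxy. destruct (Rle_lt_or_eq _ _ Hxy) as [Hlt|Heq]; [|subst; lra].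
  assert (H := incr_function_le (fun t => - kA M t) x y
     (fun t => (1 + (2 * M - exp (- M)) * exp (- t) * (t + M + 1)) / ((t + M) ^ 2))).
  enough (- kA M x < - kA M y) by lra.
  apply H; simpl; try lra.
  - intros t Ht1 Ht2. unfold kA. auto_derive.
    + lra.
    + field. lra.
  - intros t Ht1 Ht2. apply Rlt_gt. apply Rdiv_lt_0_compat; [|nra].
    assert (F1 := exp_bound (t + M) ltac:(lra)).
    replace (exp (- (t + M))) with (exp (- M) * exp (- t)) in F1
      by (rewrite <- exp_plus; f_equal; ring).
    assert (P1 : 0 < M * exp (- t) * (t + M + 1)).
    { assert (exp (- t) > 0) by apply exp_pos. apply Rmult_lt_0_compat; [|lra]. nra. }
    nra.
Qed.

Lemma kB_anti M x y : 0 < M -> 0 <= x -> x <= y -> y <= M -> kB M y <= kB M x.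
Proof.
  intros HM Hx Hxy Hy. unfold kB. apply div_le; try lra.
  assert (E1 := exp_le (x - M) (y - M) ltac:(lra)).
  assert (E2 := exp_le (y - M) 0 ltac:(lra)). rewrite exp_0 in E2.
  nra.
Qed.

Lemma kB_nonneg M x : 0 < M -> 0 <= x <= M -> 0 <= kB M x.
Proof.
  intros HM Hx. unfold kB. apply Rmult_le_pos; [|left; apply Rinv_0_lt_compat; lra].
  assert (E2 := exp_le (x - M) 0 ltac:(lra)). rewrite exp_0 in E2. lra.
Qed.

Lemma hP_nonneg_A M y : 0 < M -> - M < y <= 0 -> 0 <= sslud_hazard M y.
Proof.
  intros HM Hy. rewrite hPA by auto. left. apply Rinv_0_lt_compat.
  rewrite kA_eq by auto. apply Rdiv_lt_0_compat. apply RA_pos; lra.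
  assert (exp y > 0) by apply exp_pos. apply Rdiv_lt_0_compat; nra.
Qed.

Lemma mono_pos M : 0 < M -> forall x y, x <= y -> sslud_hazard M x <= sslud_hazard M y.
Proof.
  intros HM x y Hxy.
  apply (glue (sslud_hazard M) (fun _ => True) 0); auto; clear x y Hxy.
  - intros x y _ _ Hxy Hy.
    apply (glue (sslud_hazard M) (fun t => t <= 0) (- M)); try lra; clear x y Hxy Hy.
    + intros x y Hx Hy Hxy Hy'. rewrite !hP0 by lra. lra.
    + intros x y Hx Hy Hx' Hxy.
      destruct (Rle_lt_or_eq _ _ Hx') as [Hx''|Hx''].
      * rewrite !hPA by lra. apply Rinv_le_contravar.
        -- rewrite kA_eq by lra. apply Rdiv_lt_0_compat. apply RA_pos; lra.
           assert (exp y > 0) by apply exp_pos. apply Rdiv_lt_0_compat; nra.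
        -- assert (kA M y <= kA M x) by (apply kA_anti; lra). lra.
      * rewrite hP0 by lra. destruct (Rle_lt_or_eq _ _ Hxy) as [H|H].
        -- apply hP_nonneg_A; lra.
        -- subst y. rewrite hP0 by lra. lra.
  - intros x y _ _ Hx Hxy.
    apply (glue (sslud_hazard M) (fun t => 0 <= t) M); try lra; clear x y Hxy Hx.
    + intros x y Hx Hy Hxy Hy'. rewrite !hPB by lra. apply Rinv_le_contravar.
      * assert (0 <= kB M y) by (apply kB_nonneg; lra). lra.
      * assert (kB M y <= kB M x) by (apply kB_anti; lra). lra.
    + intros x y Hx Hy Hx' Hxy. rewrite !hPC by lra. lra.
Qed.

Definition k2 m t := ((2 * m + exp (- m)) * exp (- t) - 1) / (m - t).
Definition k3 m t := (exp (t - m) - 1) / (m - t).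

Lemma RN1_eq m x : 0 < m -> RN1 m x = 1 - exp x.
Proof.
  intros Hm. unfold RN1, RN2, RN3, FN2, FN3. rewrite Ropp_0, exp_0.
  replace (- - m) with m by ring. field. lra.
Qed.

Lemma RN3_0 m : 0 < m -> RN3 m 0 = (exp (- m) - (1 - m)) / (2 * m).
Proof. intros Hm. unfold RN3, FN3. rewrite Ropp_0, exp_0. field. lra. Qed.

Lemma hN1 m x : 0 < m -> x <= - m -> sslud_hazard (- m) x = exp x / (1 - exp x).
Proof. intros Hm Hx. unfold sslud_hazard. rewrite dNA, relN1, RN1_eq by lra. reflexivity. Qed.

Lemma k2_eq m x : 0 < m -> - m <= x <= 0 ->
  -1 + k2 m x = RN2 m x / (exp x * (m - x) / (2 * m)).
Proof.
  intros Hm Hx. unfold k2, RN2, RN3, FN2, FN3. rewrite Ropp_0, exp_0.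
  rewrite (exp_Ropp x). assert (exp x <> 0) by (apply Rgt_not_eq, exp_pos).
  field. repeat split; lra.
Qed.

Lemma hN2 m x : 0 < m -> - m <= x <= 0 -> 0 < sslud_reliability (- m) x ->
  sslud_hazard (- m) x = / (-1 + k2 m x).
Proof.
  intros Hm Hx HR. rewrite relN2 in HR by lra. unfold sslud_hazard.
  rewrite dNB, relN2 by lra. rewrite k2_eq by auto. apply inv_div.
  - assert (exp x > 0) by apply exp_pos. apply Rgt_not_eq. apply Rdiv_lt_0_compat; nra.
  - lra.
Qed.

Lemma k3_eq m x : 0 < m -> 0 <= x < m ->
  1 + k3 m x = RN3 m x / (exp (- x) * (m - x) / (2 * m)).
Proof.
  intros Hm Hx. unfold k3, RN3, FN3.
  replace (exp (x - m)) with (exp x * exp (- m)) by (unfold Rminus; symmetry; apply exp_plus).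
  rewrite (exp_Ropp x). assert (exp x <> 0) by (apply Rgt_not_eq, exp_pos).
  field. repeat split; lra.
Qed.

Lemma hN3 m x : 0 < m -> 0 <= x < m -> 0 < sslud_reliability (- m) x ->
  sslud_hazard (- m) x = / (1 + k3 m x).
Proof.
  intros Hm Hx HR. rewrite relN3 in HR by lra. unfold sslud_hazard.
  rewrite dNC, relN3 by lra. rewrite k3_eq by auto. apply inv_div.
  - assert (exp (- x) > 0) by apply exp_pos. apply Rgt_not_eq. apply Rdiv_lt_0_compat; nra.
  - lra.
Qed.

Lemma k2_anti m x y : 0 < m -> - m <= x -> x <= y -> y <= 0 -> k2 m y <= k2 m x.
Proof.
  intros Hm Hx Hxy Hy. destruct (Rle_lt_or_eq _ _ Hxy) as [Hlt|Heq]; [|subst; lra].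
  assert (H := incr_function_le (fun t => - k2 m t) x y
     (fun t => (1 - (2 * m + exp (- m)) * exp (- t) * (1 - m + t)) / ((m - t) ^ 2))).
  enough (- k2 m x < - k2 m y) by lra.
  apply H; simpl; try lra.
  - intros t Ht1 Ht2. unfold k2. auto_derive.
    + lra.
    + field. lra.
  - intros t Ht1 Ht2. apply Rlt_gt. apply Rdiv_lt_0_compat; [|nra].
    set (E := exp (- t)). set (A := exp (- m)).
    assert (F1 : E * (t + 1) <= 1) by apply exp_bound_le.
    assert (F2 : A * (m + 1) < 1) by (apply exp_bound; lra).
    assert (PE : 0 < E) by apply exp_pos. assert (PA : 0 < A) by apply exp_pos.
    destruct (Rle_dec (1 - m + t) 0) as [Hn|Hp].
    + assert (0 <= (2 * m + A) * E) by nra. nra.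
    + assert (H0 : 0 <= E * (m * (- t))) by (apply Rmult_le_pos; nra).
      assert (G0 : E * (1 - m + t) <= (1 - m) * (E * (t + 1))).
      { replace ((1 - m) * (E * (t + 1))) with (E * (1 - m + t) + E * (m * (- t))) by ring. lra. }
      assert (G1 : E * (1 - m + t) <= 1 - m).
      { assert ((1 - m) * (E * (t + 1)) <= (1 - m) * 1) by (apply Rmult_le_compat_l; lra). lra. }
      assert (G2 : (2 * m + A) * (1 - m) * (1 + m) < 1 + m) by nra.
      assert (G3 : (2 * m + A) * (1 - m) < 1) by nra.
      assert (G4 : (2 * m + A) * (E * (1 - m + t)) <= (2 * m + A) * (1 - m)) by nra.
      nra.
Qed.

Lemma k3_anti m x y : 0 < m -> 0 <= x -> x <= y -> y < m -> k3 m y <= k3 m x.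
Proof.
  intros Hm Hx Hxy Hy. destruct (Rle_lt_or_eq _ _ Hxy) as [Hlt|Heq]; [|subst; lra].
  assert (H := incr_function_le (fun t => - k3 m t) x y
     (fun t => (1 - exp (t - m) * (m - t + 1)) / ((m - t) ^ 2))).
  enough (- k3 m x < - k3 m y) by lra.
  apply H; simpl; try lra.
  - intros t Ht1 Ht2. unfold k3. auto_derive.
    + lra.
    + unfold Rminus. field. lra.
  - intros t Ht1 Ht2. apply Rlt_gt. apply Rdiv_lt_0_compat; [|nra].
    assert (F := exp_bound (m - t) ltac:(lra)).
    replace (- (m - t)) with (t - m) in F by ring. lra.
Qed.

Lemma mono_neg m : 0 < m -> forall x y,
  0 < sslud_reliability (- m) x -> 0 < sslud_reliability (- m) y -> x <= y ->
  sslud_hazard (- m) x <= sslud_hazard (- m) y.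
Proof.
  intros Hm.
  assert (Slt : forall t, 0 < sslud_reliability (- m) t -> t < m).
  { intros t Ht. destruct (Rlt_dec t m) as [h|h]; auto. rewrite relN4 in Ht by lra. lra. }
  apply (glue (sslud_hazard (- m)) (fun t => 0 < sslud_reliability (- m) t) 0).
  - rewrite relN3, RN3_0 by lra. apply Rdiv_lt_0_compat; [|lra].
    assert (H := exp_ineq1 (- m) ltac:(lra)). lra.
  - intros x y Sx Sy Hxy Hy.
    apply (glue (sslud_hazard (- m)) (fun t => 0 < sslud_reliability (- m) t /\ t <= 0) (- m));
      try (split; [assumption|lra]); try lra; clear x y Sx Sy Hxy Hy.
    + split; [|lra]. rewrite relN1, RN1_eq by lra.
      assert (H := exp_increasing (- m) 0 ltac:(lra)). rewrite exp_0 in H. lra.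
    + intros x y _ _ Hxy Hy. rewrite !hN1 by lra.
      assert (H1 := exp_increasing y 0 ltac:(lra)). rewrite exp_0 in H1.
      assert (H2 := exp_le x y Hxy). assert (H3 := exp_pos x).
      apply div_le; nra.
    + intros x y [Sx Hx] [Sy Hy] Hx' Hxy. rewrite !hN2 by lra.
      apply Rinv_le_contravar.
      * rewrite k2_eq by lra. rewrite relN2 in Sy by lra. apply Rdiv_lt_0_compat; auto.
        assert (exp y > 0) by apply exp_pos. apply Rdiv_lt_0_compat; nra.
      * assert (k2 m y <= k2 m x) by (apply k2_anti; lra). lra.
  - intros x y Sx Sy Hx Hxy.
    assert (Hy := Slt y Sy).
    rewrite !hN3 by lra. apply Rinv_le_contravar.
    + rewrite k3_eq by lra. rewrite relN3 in Sy by lra. apply Rdiv_lt_0_compat; auto.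
      assert (exp (- y) > 0) by apply exp_pos. apply Rdiv_lt_0_compat; nra.
    + assert (k3 m y <= k3 m x) by (apply k3_anti; lra). lra.
Qed.

Theorem mainTheorem6 :
  (forall mu : R, 0 < mu ->
     forall x : R,
       (x < - mu -> sslud_hazard mu x = 0) /\
       (x = - mu -> sslud_hazard mu x = 0) /\
       (- mu < x < 0 ->
          sslud_hazard mu x =
          / (-1 + (1 + (2 * mu - exp (- mu)) * exp (- x)) / (x + mu))) /\
       (0 <= x < mu ->
          sslud_hazard mu x = / (1 + (1 - exp (x - mu)) / (x + mu))) /\
       (mu <= x -> sslud_hazard mu x = 1)) /\
  (forall mu : R, mu <> 0 ->
     forall x y : R,
       0 < sslud_reliability mu x -> 0 < sslud_reliability mu y -> x <= y ->
       sslud_hazard mu x <= sslud_hazard mu y).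
Proof.
  split.
  - intros mu Hmu x. split; [|split; [|split; [|split]]].
    + intros; apply hP0; lra.
    + intros; apply hP0; lra.
    + intros. apply (hPA mu x); lra.
    + intros. apply (hPB mu x); lra.
    + intros; apply hPC; lra.
  - intros mu Hmu x y Sx Sy Hxy.
    destruct (Rlt_dec 0 mu) as [Hp|Hn].
    + apply mono_pos; auto.
    + assert (Hm : 0 < - mu) by (destruct (Rle_lt_or_eq mu 0); lra).
      assert (E : mu = - (- mu)) by ring. rewrite E in Sx, Sy |- *.
      apply mono_neg; auto.
Qed.
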